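(* Let $X$ be a regular closed subset of a topological space $T$ and $S$ a connected component of $-X$. If $-X$ has finitely many components, then $\delta S\subseteq X$. Alternatively, if $T$ is locally connected, then $\delta S\subseteq X$.
   Context: $-X$ denotes $\overline{T\setminus X}$, the closure of the complement of $X$. $\delta S=\overline{S}\setminus\mathrm{int}(S)$ is the boundary of $S$. A component is a maximal connected subset. $T$ is locally connected if every neighbourhood of every point includes a connected neighbourhood of that point. *)

(* Defs.v *)
From HB Require Import structures.
From mathcomp Require Import all_boot all_order all_algebra.
From mathcomp Require Import all_classical all_reals all_analysis.
Set Implicit Arguments. Unset Strict Implicit. Unset Printing Implicit Defensive.
Local Open Scope classical_set_scope.

(* -X : the closure of the complement of X *)
Definition cl_compl {T : topologicalType} (X : set T) : set T := closure (~` X).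

Definition bdry {T : topologicalType} (S : set T) : set T := closure S `\` S°.

Definition is_component {T : topologicalType} (A S : set T) : Prop :=
  [/\ S `<=` A, connected S &
      forall C : set T, connected C -> S `<=` C -> C `<=` A -> C = S].

Definition locally_connected_space (T : topologicalType) : Prop :=
  forall (x : T) (U : set T), nbhs x U ->
    exists V : set T, [/\ nbhs x V, connected V & V `<=` U].

(* Main.v *)
Require Import Defs.
From HB Require Import structures.
From mathcomp Require Import all_boot all_order all_algebra.
From mathcomp Require Import all_classical all_reals all_analysis.
Local Open Scope classical_set_scope.

Section H.
Variable T : topologicalType.
Implicit Types A S C : set T.

Lemma comp_eq A S x : is_component A S -> S x -> S = connected_component A x.
Proof.
move=> [SA cS mS] Sx; apply/esym/mS.
- exact: component_connected.
- exact: connected_component_max.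
- exact: connected_component_sub.
Qed.

Lemma cc_comp A x : A x -> is_component A (connected_component A x).
Proof.
move=> Ax; split; [exact: connected_component_sub|exact: component_connected|].
move=> C cC sC CA; apply/seteqP; split => //.
apply: connected_component_max => //; apply: sC; exact: connected_component_refl.
Qed.

Lemma comp_closed A S : closed A -> is_component A S -> closed S.
Proof.
move=> cA cS; have [->|/set0P[x Sx]] := eqVneq S set0; first exact: closed0.
rewrite (@comp_eq _ _ _ cS Sx); exact: component_closed.
Qed.
End H.
Arguments comp_eq {T A S x}.
Arguments cc_comp {T A x}.
Arguments comp_closed {T A S}.

Theorem lemma2p1 (T : topologicalType) (X S : set T) :
  regclosed X -> is_component (cl_compl X) S ->
  (finite_set [set C : set T | is_component (cl_compl X) C] -> bdry S `<=` X) /\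
  (locally_connected_space T -> bdry S `<=` X).
Proof.
move=> rX cS.
set A := cl_compl X.
have cA : closed A by exact: closed_closure.
have cX : closed X by rewrite -rX; exact: closed_closure.
have oX : open (~` X) by exact: closed_openC.
have XA : ~` X `<=` A by exact: subset_closure.
have cSc : closed S by exact: comp_closed cS.
have SA : S `<=` A by case: cS.
split.
  - move=> fin x [clSx nint]; apply: contrapT => nXx.
    have Sx : S x by move: clSx; rewrite -(closure_id S).1.
    apply: nint => /=.
    set F := [set C : set T | is_component A C].
    set R := \bigcup_(C in F `\ S) C.
    have cR : closed R.
      apply: closed_bigcup; first exact: finite_setD.
      by move=> C [FC _]; exact: comp_closed FC.
    have nRx : ~ R x.
      move=> [C [FC CS] Cx]; apply: CS.
      by rewrite (comp_eq FC Cx) (comp_eq cS Sx).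
    have oU : open (~` X `&` ~` R) by apply: openI => //; exact: closed_openC.
    apply: (@filterS _ _ _ (~` X `&` ~` R)).
      move=> y [nXy nRy]; have Ay : A y by exact: XA.
      have Cy := cc_comp Ay.
      have [E|NE] := pselect (connected_component A y = S).
        by rewrite -E; exact: connected_component_refl.
      exfalso; apply: nRy; exists (connected_component A y).
        by split => //.
      exact: connected_component_refl.
    by apply: open_nbhs_nbhs; split.
  - move=> lc x [clSx nint]; apply: contrapT => nXx.
    have Sx : S x by move: clSx; rewrite -(closure_id S).1.
    apply: nint => /=.
    have [V [nV cV VX]] := lc x (~` X) (open_nbhs_nbhs (conj oX nXx)).
    have Vx : V x by exact: nbhs_singleton.
    case: cS => _ cS' mS.
    have E : V `|` S = S.
      apply: mS.
      - by apply: connectedU => //; exists x.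
      - by move=> y Sy; right.
      - by move=> y [Vy|Sy]; [apply: XA; apply: VX|apply: SA].
    by apply: filterS nV => y Vy; rewrite -E; left.
Qed.
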